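(* Let $A,B,C$ be distinct subsystems, $\rho_{ABC}$ a subnormalized state on $ABC$, $r\ge0$, $\eta\in(0,\operatorname{tr}\rho_{ABC}]$. Then $H^{r,\eta}_H(A|BC)_\rho\le H^{r,\eta}_H(A|B)_\rho$.
   Context: All logarithms are natural; subnormalized state = positive semidefinite, trace $\le1$; POVM effect = $0\le Q\le\mathbb 1$. Let $S_1\cdots S_N$ be a finite-dimensional composite system and $S_I$ the composite of the $S_i$, $i\in I$ ($A,B,C$ are of the form $S_I,S_J,S_K$ with pairwise disjoint index sets). A family of POVM-effect-complexity sets is a collection of sets $\mathcal M^r_{S_I}$ of POVM effects on $S_I$ with (i) $\mathbb 1_{S_I}\in\mathcal M^0_{S_I}$; (ii) $\mathcal M^r_{S_I}\subseteq\mathcal M^{r'}_{S_I}$ for $r\le r'$; (iii) $Q_1\otimes Q_2\in\mathcal M^{r+r'}_{S_IS_J}$ for disjoint $I,J$, $Q_1\in\mathcal M^r_{S_I}$, $Q_2\in\mathcal M^{r'}_{S_J}$. Fix such a family. Complexity relative entropy on subsystem $X$: $D^{r,\eta}_H(\rho\|\Gamma)=-\log\inf\{\operatorname{tr}(Q\Gamma)/\operatorname{tr}(Q\rho): Q\in\mathcal M^r_X,\operatorname{tr}(Q\rho)\ge\eta\}$. Complexity conditional entropy: $H^{r,\eta}_H(X|Y)_\rho=-D^{r,\eta}_H(\rho_{XY}\|\mathbb 1_X\otimes\rho_Y)$ with $\rho_{XY},\rho_Y$ the reduced states of $\rho$. *)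

(* Defs.v *)
From mathcomp Require Import all_boot all_order all_algebra.
From mathcomp Require Import complex.
From mathcomp Require Import classical_sets reals exp.

Set Implicit Arguments.
Unset Strict Implicit.
Unset Printing Implicit Defensive.

Import Order.TTheory GRing.Theory Num.Theory.
Local Open Scope ring_scope.

Section Composite.

Variable R : realType.
(* Composite system S_1 ... S_N ; site i has orthonormal basis indexed by T i,
   i.e. Hilbert space C^(T i). *)
Variable N : nat.
Variable T : 'I_N -> finType.

(* Ambient "configuration" type: a partial basis label, None = site absent. *)
Definition amb := {dffun forall i : 'I_N, option (T i)}.

Definition onI (I : {set 'I_N}) (f : amb) : bool :=
  [forall i, (f i != None) == (i \in I)].

(* basis of the Hilbert space of S_I = tensor_{i in I} C^(T i) *)
Definition conf (I : {set 'I_N}) := {f : amb | onI I f}.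

Definition rst (J : {set 'I_N}) (f : amb) : amb :=
  [ffun i => if i \in J then f i else None].

Lemma onI_rst (I K : {set 'I_N}) (h : I \subset K) (u : conf K) :
  onI I (rst I (val u)).
Proof.
apply/forallP => i; rewrite /rst ffunE.
case: ifP => // iI.
have := forallP (valP u) i; rewrite (fintype.subsetP h i iI) => /eqP ->.
by [].
Qed.

Definition restr (I K : {set 'I_N}) (h : I \subset K) (u : conf K) : conf I :=
  exist _ (rst I (val u)) (onI_rst h u).

(* linear operators on S_I, as matrices in the product basis *)
Definition op (I : {set 'I_N}) := conf I -> conf I -> R[i].

Definition id_op (I : {set 'I_N}) : op I := fun x y => (x == y)%:R.

Definition opsub (I : {set 'I_N}) (P Q : op I) : op I := fun x y => P x y - Q x y.

Definition opmul (I : {set 'I_N}) (P Q : op I) : op I :=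
  fun x y => \sum_(z : conf I) P x z * Q z y.

Definition tr (I : {set 'I_N}) (P : op I) : R[i] := \sum_(x : conf I) P x x.

Definition psd (I : {set 'I_N}) (P : op I) : Prop :=
  forall v : conf I -> R[i],
    0 <= \sum_(x : conf I) \sum_(y : conf I) (v x)^*%C * P x y * v y.

Definition subnormalized (I : {set 'I_N}) (rho : op I) : Prop :=
  psd rho /\ tr rho <= 1.

Definition effect (I : {set 'I_N}) (Q : op I) : Prop :=
  psd Q /\ psd (opsub (@id_op I) Q).

Definition tens (I J : {set 'I_N}) (Q1 : op I) (Q2 : op J) : op (I :|: J) :=
  fun u v => Q1 (restr (finset.subsetUl I J) u) (restr (finset.subsetUl I J) v)
           * Q2 (restr (finset.subsetUr I J) u) (restr (finset.subsetUr I J) v).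

(* partial trace of an operator on S_K down to S_J (meaningful for J \subset K):
   (ptr J rho) x y = sum_z rho (x z) (y z), z ranging over the basis of S_{K \ J} *)
Definition ptr (K J : {set 'I_N}) (rho : op K) : op J :=
  fun x y => \sum_(u : conf K) \sum_(v : conf K |
      [&& rst J (val u) == val x, rst J (val v) == val y &
          rst (K :\: J) (val u) == rst (K :\: J) (val v)]) rho u v.

Definition complexity_family (M : forall I : {set 'I_N}, R -> op I -> Prop) : Prop :=
  [/\ (forall (I : {set 'I_N}) (r : R) (Q : op I), 0 <= r -> M I r Q -> effect Q),
      (forall I : {set 'I_N}, M I 0 (@id_op I)),
      (forall (I : {set 'I_N}) (r r' : R) (Q : op I), 0 <= r -> r <= r' -> M I r Q -> M I r' Q) &
      (forall (I J : {set 'I_N}) (r r' : R) (Q1 : op I) (Q2 : op J), [disjoint I & J] -> 0 <= r -> 0 <= r' ->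
         M I r Q1 -> M J r' Q2 -> M (I :|: J) (r + r') (tens Q1 Q2))].

Definition DH (M : forall I : {set 'I_N}, R -> op I -> Prop)
    (X : {set 'I_N}) (r eta : R) (rho Gamma : op X) : R :=
  - ln (inf [set complex.Re (tr (opmul Q Gamma) / tr (opmul Q rho)) |
              Q in [set Q | M X r Q /\ (eta%:C)%C <= tr (opmul Q rho)]]).

Definition HH (M : forall I : {set 'I_N}, R -> op I -> Prop)
    (r eta : R) (K X Y : {set 'I_N}) (rho : op K) : R :=
  - @DH M (X :|: Y) r eta (@ptr K (X :|: Y) rho) (@tens X Y (@id_op X) (@ptr K Y rho)).

End Composite.

(* Main.v *)
Require Import Defs.
From mathcomp Require Import all_boot all_order all_algebra.
From mathcomp Require Import complex.
From mathcomp Require Import classical_sets reals exp.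
From mathcomp Require Import ring lra.
Set Implicit Arguments.
Unset Strict Implicit.
Unset Printing Implicit Defensive.
Import Order.TTheory GRing.Theory Num.Theory.
Local Open Scope ring_scope.


Section Gen.
Variable R : realType.
Variable X : finType.
Local Notation C := R[i].

Definition bil (P : X -> X -> C) (u v : X -> C) : C :=
  \sum_x \sum_y (u x)^*%C * P x y * v y.
Definition psdX (P : X -> X -> C) := forall v, 0 <= bil P v v.

Lemma sum_delta (F : X -> C) x : \sum_z ((z == x)%:R * F z) = F x.
Proof.
rewrite (bigD1 x) //= eqxx mul1r big1 ?addr0 // => z /negbTE ->; by rewrite mul0r.
Qed.

Lemma sum_deltar (F : X -> C) x : \sum_z (F z * (z == x)%:R) = F x.
Proof.
rewrite (bigD1 x) //= eqxx mulr1 big1 ?addr0 // => z /negbTE ->; by rewrite mulr0.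
Qed.

Lemma bilDl P u u' v : bil P (fun z => u z + u' z) v = bil P u v + bil P u' v.
Proof.
rewrite /bil -big_split /=; apply: eq_bigr => x _; rewrite -big_split /=.
apply: eq_bigr => y _; by rewrite rmorphD /= !mulrDl.
Qed.

Lemma bilDr P u v v' : bil P u (fun z => v z + v' z) = bil P u v + bil P u v'.
Proof.
rewrite /bil -big_split /=; apply: eq_bigr => x _; rewrite -big_split /=.
apply: eq_bigr => y _; by rewrite mulrDr.
Qed.

Lemma bilZl P c u v : bil P (fun z => c * u z) v = c^*%C * bil P u v.
Proof.
rewrite /bil mulr_sumr; apply: eq_bigr => x _; rewrite mulr_sumr.
apply: eq_bigr => y _; by rewrite rmorphM /= !mulrA.
Qed.

Lemma bilZr P c u v : bil P u (fun z => c * v z) = c * bil P u v.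
Proof.
rewrite /bil mulr_sumr; apply: eq_bigr => x _; rewrite mulr_sumr.
apply: eq_bigr => y _; by rewrite mulrCA.
Qed.

Lemma bilNl P u v : bil P (fun z => - u z) v = - bil P u v.
Proof.
rewrite /bil -sumrN; apply: eq_bigr => x _; rewrite -sumrN.
by apply: eq_bigr => y _; rewrite rmorphN /= !mulNr.
Qed.

Lemma bilNr P u v : bil P u (fun z => - v z) = - bil P u v.
Proof.
rewrite /bil -sumrN; apply: eq_bigr => x _; rewrite -sumrN.
by apply: eq_bigr => y _; rewrite mulrN.
Qed.

Lemma bil_deltal P x v : bil P (fun z => (z == x)%:R) v = \sum_y P x y * v y.
Proof.
rewrite /bil; transitivity (\sum_z (z==x)%:R * \sum_y P z y * v y); last exact: sum_delta.
apply: eq_bigr => z _; rewrite conjc_nat mulr_sumr; apply: eq_bigr => y _; by rewrite mulrA.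
Qed.

Lemma bil_deltar P u y : bil P u (fun z => (z == y)%:R) = \sum_x (u x)^*%C * P x y.
Proof.
rewrite /bil; apply: eq_bigr => x _; exact: sum_deltar.
Qed.

Lemma bil_delta P x y : bil P (fun z => (z == x)%:R) (fun z => (z == y)%:R) = P x y.
Proof. by rewrite bil_deltal sum_deltar. Qed.

Lemma bil_suml (I : finType) P (f : I -> X -> C) v :
  bil P (fun z => \sum_i f i z) v = \sum_i bil P (f i) v.
Proof.
rewrite /bil; symmetry; rewrite exchange_big /=; apply: eq_bigr => x _.
rewrite exchange_big /=; apply: eq_bigr => y _.
by rewrite rmorph_sum /= !mulr_suml.
Qed.

Lemma bil_sumr (I : finType) P u (f : I -> X -> C) :
  bil P u (fun z => \sum_i f i z) = \sum_i bil P u (f i).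
Proof.
rewrite /bil; symmetry; rewrite exchange_big /=; apply: eq_bigr => x _.
rewrite exchange_big /=; apply: eq_bigr => y _.
by rewrite !mulr_sumr.
Qed.

End Gen.


Section H.
Variable R : realType.
Variable X : finType.
Local Notation C := R[i].

Lemma bil2 (P : X -> X -> C) x y t :
  bil P (fun z => (z==x)%:R + t * (z==y)%:R) (fun z => (z==x)%:R + t * (z==y)%:R)
  = P x x + t * P x y + t^*%C * P y x + t^*%C * t * P y y.
Proof.
rewrite (bilDl P (fun z => (z==x)%:R) (fun z => t * (z==y)%:R)).
rewrite !(bilDr P _ (fun z => (z==x)%:R) (fun z => t * (z==y)%:R)).
rewrite !(bilZl P t (fun z => (z==y)%:R)) !(bilZr P t _ (fun z => (z==y)%:R)).
rewrite !bil_delta; by rewrite !mulrA !addrA.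
Qed.

Lemma ge0C (z : C) : 0 <= z -> complex.Im z = 0 /\ 0 <= complex.Re z.
Proof. by case: z => a b; rewrite lecE /= => /andP[/eqP h1 h2]. Qed.

Lemma psd_herm (P : X -> X -> C) : psdX P -> forall x y, P y x = (P x y)^*%C.
Proof.
move=> hP x y.
have hd z : 0 <= P z z by have := hP (fun w => (w == z)%:R); rewrite bil_delta.
have [<-|xy] := eqVneq x y.
  have /ge0C [h1 _] := hd x.
  by move: h1; case: (P x x) => a b /= ->; rewrite /= oppr0.
have h1 := hP (fun z => (z==x)%:R + 1 * (z==y)%:R); rewrite bil2 in h1.
have h2 := hP (fun z => (z==x)%:R + 'i%C * (z==y)%:R); rewrite bil2 in h2.
have /ge0C [hx _] := hd x; have /ge0C [hy _] := hd y.
move: h1 h2 hx hy; rewrite rmorph1 !mul1r.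
case: (P x x) => a b; case: (P y y) => c d; case: (P x y) => e f; case: (P y x) => g h /=.
move=> H1 H2 hb hd2; subst b d; move: H1 H2; simpc.
move=> /andP[/eqP H1 _] /andP[/eqP H2 _].
by congr Complex; lra.
Qed.

End H.

Section T.
Variable R : realType.
Variable X : finType.
Local Notation C := R[i].

Lemma bil2' (P : X -> X -> C) x y a t :
  bil P (fun z => a * (z==x)%:R + t * (z==y)%:R) (fun z => a * (z==x)%:R + t * (z==y)%:R)
  = a^*%C * a * P x x + a^*%C * t * P x y + t^*%C * a * P y x + t^*%C * t * P y y.
Proof.
rewrite (bilDl P (fun z => a * (z==x)%:R) (fun z => t * (z==y)%:R)).
rewrite !(bilDr P _ (fun z => a * (z==x)%:R) (fun z => t * (z==y)%:R)).
rewrite !(bilZl P t (fun z => (z==y)%:R)) !(bilZr P t _ (fun z => (z==y)%:R)).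
rewrite !(bilZl P a (fun z => (z==x)%:R)) !(bilZr P a _ (fun z => (z==x)%:R)).
rewrite !bil_delta !mulrA !addrA; congr (_ + _ + _ + _); by rewrite (mulrC t).
Qed.

Lemma psd_row0 (P : X -> X -> C) x0 : psdX P -> P x0 x0 = 0 -> forall y, P y x0 = 0.
Proof.
move=> hP p0 y.
have hd z : 0 <= P z z by have := hP (fun w => (w == z)%:R); rewrite bil_delta.
have hh := psd_herm hP.
have [->|yx] := eqVneq y x0; first by [].
have /ge0C [hy hy2] := hd y.
have hx0 := hh y x0.
move: hy hy2; case E : (P y x0) hx0 => [g h] hx0.
case Ey : (P y y) => [c d] /= hd0 hc; subst d.
pose m := g ^+ 2 + h ^+ 2.
case: (eqVneq m 0) => m0.
  have g0 : g = 0 by apply/eqP; rewrite -sqrf_eq0; apply/eqP; 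
    move: m0; rewrite /m; nra.
  have h0 : h = 0 by move: m0; rewrite /m g0; nra.
  by rewrite g0 h0.
exfalso.
have := hP (fun z => m%:C%C * (z==y)%:R + (Complex (- (c + 1) * g) ((c + 1) * h)) * (z==x0)%:R).
rewrite bil2' hx0 E Ey p0 /=; simpc => /andP[_].
have mp : 0 < m by rewrite lt_def m0 /m; apply: addr_ge0; apply: sqr_ge0.
set k := (X in 0 <= X -> _).
have -> : k = - (m * m * (c + 2)) by rewrite /k /m; ring.
rewrite oppr_ge0 => H.
have : 0 < m * m * (c + 2) by rewrite !mulr_gt0 // ltr_wpDl.
by rewrite ltNge H.
Qed.

End T.


Section T2.
Variable R : realType.
Variable X : finType.
Local Notation C := R[i].

Lemma psd_update (P : X -> X -> C) x0 : psdX P -> P x0 x0 != 0 ->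
  psdX (fun x y => P x y - P x x0 * P x0 y / P x0 x0).
Proof.
move=> hP p0 v.
set p := P x0 x0.
have hpr : p^*%C = p.
  have /ge0C [hi _] : 0 <= p by have := hP (fun w => (w == x0)%:R); rewrite bil_delta.
  by move: hi; rewrite /p; case: (P x0 x0) => a b /= ->; rewrite /= oppr0.
set al := \sum_x (v x)^*%C * P x x0.
set be := \sum_y P x0 y * v y.
have -> : bil (fun x y => P x y - P x x0 * P x0 y / p) v v = bil P v v - al * be / p.
  rewrite /bil /al /be mulr_suml mulr_suml -sumrB; apply: eq_bigr => x _.
  rewrite mulr_sumr mulr_suml -sumrB; apply: eq_bigr => y _.
  rewrite mulrBr mulrBl; congr (_ - _); rewrite !mulrA; ring.
pose t := - be / p.
have := hP (fun z => v z + t * (z == x0)%:R).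
rewrite (bilDl P v (fun z => t * (z==x0)%:R)).
rewrite !(bilDr P _ v (fun z => t * (z==x0)%:R)).
rewrite !(bilZl P t (fun z => (z==x0)%:R)) !(bilZr P t _ (fun z => (z==x0)%:R)).
rewrite bil_delta bil_deltal bil_deltar -/al -/be -/p.
have -> : t^*%C = - be^*%C / p by rewrite /t rmorphM rmorphN /= conjc_inv hpr.
congr (0 <= _); rewrite /t; field; by [].
Qed.

End T2.


Section T3.
Variable R : realType.
Variable X : finType.
Local Notation C := R[i].

Lemma tr_psd (Q P : X -> X -> C) : psdX Q -> psdX P ->
  0 <= \sum_x \sum_z Q x z * P z x.
Proof.
move=> hQ hP0; move: P hP0 => P0 hP0.
suff H : forall n (S : {set X}) P, (#|S| <= n)%N -> psdX P ->
    (forall x y, x \notin S -> P x y = 0) -> 0 <= \sum_x \sum_z Q x z * P z x.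
  by apply: (H _ (finset.setT : {set X}) P0 (leqnn _) hP0) => x y; rewrite finset.in_setT.
have zero (P : X -> X -> C) (S : {set X}) : psdX P -> (forall x y, x \notin S -> P x y = 0) -> S = (finset.set0 : {set X}) ->
    0 <= \sum_x \sum_z Q x z * P z x.
  move=> hP hs S0; rewrite big1 // => x _; rewrite big1 // => z _.
  by rewrite (psd_herm hP) hs ?S0 ?inE // rmorph0 mulr0.
elim=> [|n IH] S P hS hP hs.
  by apply: (zero P S) => //; apply/eqP; rewrite -cards_eq0 -leqn0.
case: (set_0Vmem S) => [S0|[x0 x0S]]; first exact: (zero P S).
have hS' : (#|S :\ x0| <= n)%N by move: hS; rewrite (cardsD1 x0) x0S.
have hh := psd_herm hP.
have [p0|p0] := eqVneq (P x0 x0) 0.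
  apply: (IH (S :\ x0)) => // x y; rewrite !inE negb_and negbK.
  case/orP => [/eqP -> | /hs //].
  by rewrite hh (psd_row0 hP p0) rmorph0.
set p := P x0 x0.
have hP2 := psd_update hP p0.
have h2 := IH (S :\ x0) _ hS' hP2.
have hw : 0 <= bil Q (fun z => P z x0) (fun z => P z x0) / p.
  apply: divr_ge0; first exact: hQ.
  by have := hP (fun w => (w == x0)%:R); rewrite bil_delta.
have -> : \sum_x \sum_z Q x z * P z x =
  \sum_x \sum_z Q x z * (P z x - P z x0 * P x0 x / p) +
  bil Q (fun z => P z x0) (fun z => P z x0) / p.
  rewrite /bil mulr_suml -big_split /=; apply: eq_bigr => x _.
  rewrite mulr_suml -big_split /=; apply: eq_bigr => z _.
  rewrite -hh; rewrite /p; field.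
  by [].
apply: addr_ge0 => //; apply: h2 => x y.
rewrite !inE negb_and negbK; case/orP => [/eqP -> | /hs hx].
  by rewrite -/p; field.
by rewrite !hx !mul0r subrr.
Qed.

End T3.


Section T4.
Variable R : realType.
Variable X : finType.
Local Notation C := R[i].

Lemma bilBB (P : X -> X -> C) u v :
  bil P (fun z => u z - v z) (fun z => u z - v z) =
  bil P u u - bil P u v - bil P v u + bil P v v.
Proof.
rewrite (bilDl P u (fun z => - v z)) !(bilDr P _ u (fun z => - v z)).
rewrite !bilNl !bilNr; ring.
Qed.

Lemma bil_nfold (I : finType) (P : X -> X -> C) (f : I -> X -> C) : psdX P ->
  bil P (fun z => \sum_i f i z) (fun z => \sum_i f i z) <=
  #|I|%:R * \sum_i bil P (f i) (f i).
Proof.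
move=> hP.
have h0 : 0 <= \sum_i \sum_j bil P (fun z => f i z - f j z) (fun z => f i z - f j z).
  by apply: sumr_ge0 => i _; apply: sumr_ge0 => j _; exact: hP.
have E : \sum_i \sum_j bil P (fun z => f i z - f j z) (fun z => f i z - f j z) =
  2%:R * (#|I|%:R * \sum_i bil P (f i) (f i) -
          bil P (fun z => \sum_i f i z) (fun z => \sum_i f i z)).
  set S1 := \sum_i bil P (f i) (f i).
  set S2 := \sum_i \sum_j bil P (f i) (f j).
  have -> : bil P (fun z => \sum_i f i z) (fun z => \sum_i f i z) = S2.
    by rewrite bil_suml; apply: eq_bigr => i _; rewrite bil_sumr.
  under eq_bigr do under eq_bigr do rewrite bilBB.
  have -> : \sum_(i : I) \sum_(j : I) (bil P (f i) (f i) - bil P (f i) (f j) - bil P (f j) (f i) + bil P (f j) (f j))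
     = \sum_(i : I) \sum_(j : I) bil P (f i) (f i) - S2 - \sum_(i : I) \sum_(j : I) bil P (f j) (f i) + \sum_(i : I) \sum_(j : I) bil P (f j) (f j).
    by rewrite -!sumrB -big_split /=; apply: eq_bigr => i _; rewrite -!sumrB -big_split.
  have -> : \sum_(i : I) \sum_(j : I) bil P (f j) (f i) = S2 by rewrite exchange_big.
  have -> : \sum_(i : I) \sum_(j : I) bil P (f j) (f j) = 
            \sum_(i : I) \sum_(j : I) bil P (f i) (f i) by rewrite exchange_big.
  have -> : \sum_(i : I) \sum_(j : I) bil P (f i) (f i) = #|I|%:R * S1.
    rewrite /S1 mulr_sumr; apply: eq_bigr => i _; by rewrite sumr_const mulr_natl.
  ring.
have h2 : (0:C) < 2%:R by rewrite ltr0n.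
by rewrite -subr_ge0 -(pmulr_rge0 _ h2) -E.
Qed.

End T4.


Section Conf.
Variables (N : nat) (T : 'I_N -> finType).
Local Notation amb := (amb T).
Local Notation conf := (conf T).

Lemma conf_out I (u : conf I) i : i \notin I -> val u i = None.
Proof.
move=> hi; have := forallP (valP u) i; rewrite (negbTE hi).
by case: (val u i).
Qed.

Lemma rstK I (u : conf I) : rst I (val u) = val u.
Proof.
apply/ffunP => i; rewrite /rst ffunE; case: ifP => // /negbT hi.
by rewrite conf_out.
Qed.

Definition glue (L : {set 'I_N}) (f g : amb) : amb :=
  [ffun i => if i \in L then f i else g i].

Lemma onI_glue L J f g : onI L f -> onI J g -> [disjoint L & J] ->
  onI (L :|: J) (glue L f g).
Proof.
move=> hf hg hd; apply/forallP => i; rewrite ffunE inE.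
case: ifP => iL /=.
  by have := forallP hf i; rewrite iL.
by have := forallP hg i.
Qed.

Definition gl (L J : {set 'I_N}) (hd : [disjoint L & J]) (a : conf L) (b : conf J) : conf (L :|: J) :=
  exist _ (glue L (val a) (val b)) (onI_glue (valP a) (valP b) hd).

Lemma rst_gl1 (L J : {set 'I_N}) (hd : [disjoint L & J]) a b : rst L (val (gl hd a b)) = val a.
Proof.
apply/ffunP => i; rewrite !ffunE; case: ifP => [iL|/negbT hi]; first by rewrite iL.
by rewrite conf_out.
Qed.

Lemma rst_gl2 (L J : {set 'I_N}) (hd : [disjoint L & J]) a b : rst J (val (gl hd a b)) = val b.
Proof.
apply/ffunP => i; rewrite !ffunE; case: ifP => [iJ|/negbT hi].
  by rewrite (disjointFl hd iJ).
by rewrite conf_out.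
Qed.

Lemma gl_restr (L J : {set 'I_N}) (hd : [disjoint L & J]) (u : conf (L :|: J)) :
  gl hd (restr (finset.subsetUl L J) u) (restr (finset.subsetUr L J) u) = u.
Proof.
apply: val_inj; apply/ffunP => i; rewrite /= !ffunE.
have [iL|iL] := boolP (i \in L); rewrite ?iL ?(negbTE iL) //=.
have [iJ|iJ] := boolP (i \in J); rewrite ?iJ ?(negbTE iJ) //.
by rewrite conf_out // inE negb_or iL iJ.
Qed.

Lemma restr_gl1 (L J : {set 'I_N}) (hd : [disjoint L & J]) a b :
  restr (finset.subsetUl L J) (gl hd a b) = a.
Proof. by apply: val_inj; rewrite /= rst_gl1. Qed.

Lemma restr_gl2 (L J : {set 'I_N}) (hd : [disjoint L & J]) a b :
  restr (finset.subsetUr L J) (gl hd a b) = b.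
Proof. by apply: val_inj; rewrite /= rst_gl2. Qed.

Lemma sum_gl (V : nmodType) (L J : {set 'I_N}) (hd : [disjoint L & J]) (F : conf (L :|: J) -> V) :
  \sum_(u : conf (L :|: J)) F u = \sum_(a : conf L) \sum_(b : conf J) F (gl hd a b).
Proof.
rewrite pair_bigA /=.
rewrite (reindex (fun p : conf L * conf J => gl hd p.1 p.2)) //.
exists (fun u => (restr (finset.subsetUl L J) u, restr (finset.subsetUr L J) u)) => [[a b] _|u _] /=.
  by rewrite restr_gl1 restr_gl2.
exact: gl_restr.
Qed.

Lemma gl_eq (L J : {set 'I_N}) (hd : [disjoint L & J]) a b a' b' :
  (val (gl hd a b) == val (gl hd a' b')) = (a == a') && (b == b').
Proof.
apply/eqP/andP => [h|[/eqP -> /eqP ->] //].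
split; apply/eqP; apply: val_inj.
  by rewrite -(rst_gl1 hd a b) h rst_gl1.
by rewrite -(rst_gl2 hd a b) h rst_gl2.
Qed.

Lemma natr_and (V : pzSemiRingType) (b1 b2 : bool) : ((b1 && b2)%:R : V) = b1%:R * b2%:R.
Proof. by case: b1; case: b2; rewrite ?mulr1 ?mulr0 ?mul0r. Qed.

End Conf.

Section Coll.
Variable V : nmodType.

Lemma if_and (b1 b2 : bool) (x : V) :
  (if b1 && b2 then x else 0) = if b1 then (if b2 then x else 0) else 0.
Proof. by case: b1. Qed.

Lemma sum_if_eq (X : finType) (y : X) (F : X -> V) :
  \sum_x (if x == y then F x else 0) = F y.
Proof. by rewrite -big_mkcond big_pred1_eq. Qed.

Lemma sum_if_const (X : finType) (b : bool) (F : X -> V) :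
  \sum_x (if b then F x else 0) = if b then \sum_x F x else 0.
Proof. by case: b => //; rewrite big1. Qed.

Lemma sum_zero (X : finType) : \sum_(x : X) (0 : V) = 0.
Proof. by rewrite big1. Qed.

End Coll.


Section Main.
Variables (N : nat) (T : 'I_N -> finType).
Variables (A B C : {set 'I_N}).
Hypotheses (hAB : [disjoint A & B]) (hAC : [disjoint A & C]) (hBC : [disjoint B & C]).
Local Notation conf := (conf T).
Local Notation K := (A :|: (B :|: C)).

Lemma hA_BC : [disjoint A & B :|: C].
Proof.
rewrite finset.disjoints_subset; apply/fintype.subsetP => i iA.
by rewrite !inE negb_or (disjointFr hAB iA) (disjointFr hAC iA).
Qed.

Lemma hAB_C : [disjoint A :|: B & C].
Proof.
rewrite disjoint_sym finset.disjoints_subset; apply/fintype.subsetP => i iC.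
by rewrite !inE negb_or (disjointFl hAC iC) (disjointFl hBC iC).
Qed.

Definition g3 (a : conf A) (b : conf B) (c : conf C) : conf K := gl hA_BC a (gl hBC b c).
Definition gAB (a : conf A) (b : conf B) : conf (A :|: B) := gl hAB a b.
Definition gBC (b : conf B) (c : conf C) : conf (B :|: C) := gl hBC b c.

Lemma sumK (V : nmodType) (F : conf K -> V) :
  \sum_u F u = \sum_a \sum_b \sum_c F (g3 a b c).
Proof. rewrite (sum_gl hA_BC); apply: eq_bigr => a _; exact: (sum_gl hBC). Qed.

Lemma sumAB (V : nmodType) (F : conf (A :|: B) -> V) :
  \sum_u F u = \sum_a \sum_b F (gAB a b).
Proof. exact: (sum_gl hAB). Qed.

Lemma sumBC (V : nmodType) (F : conf (B :|: C) -> V) :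
  \sum_u F u = \sum_b \sum_c F (gBC b c).
Proof. exact: (sum_gl hBC). Qed.

Lemma vAB a b c : rst (A :|: B) (val (g3 a b c)) = val (gAB a b).
Proof. apply/ffunP => i; rewrite /= !ffunE /= ?ffunE ?inE;
  have [iA|iA] := boolP (i \in A); have [iB|iB] := boolP (i \in B);
  have [iC|iC] := boolP (i \in C);
  rewrite ?iA ?iB ?iC ?(negbTE iA) ?(negbTE iB) ?(negbTE iC) /=;
  rewrite ?(conf_out _ iA) ?(conf_out _ iB) ?(conf_out _ iC) //;
  try (by rewrite (disjointFr hAB iA) in iB);
  try (by rewrite (disjointFr hAC iA) in iC);
  try (by rewrite (disjointFr hBC iB) in iC). Qed.
Lemma vBC a b c : rst (B :|: C) (val (g3 a b c)) = val (gBC b c).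
Proof. apply/ffunP => i; rewrite /= !ffunE /= ?ffunE ?inE;
  have [iA|iA] := boolP (i \in A); have [iB|iB] := boolP (i \in B);
  have [iC|iC] := boolP (i \in C);
  rewrite ?iA ?iB ?iC ?(negbTE iA) ?(negbTE iB) ?(negbTE iC) /=;
  rewrite ?(conf_out _ iA) ?(conf_out _ iB) ?(conf_out _ iC) //;
  try (by rewrite (disjointFr hAB iA) in iB);
  try (by rewrite (disjointFr hAC iA) in iC);
  try (by rewrite (disjointFr hBC iB) in iC). Qed.
Lemma vA a b c : rst A (val (g3 a b c)) = val a.
Proof. apply/ffunP => i; rewrite /= !ffunE /= ?ffunE ?inE;
  have [iA|iA] := boolP (i \in A); have [iB|iB] := boolP (i \in B);
  have [iC|iC] := boolP (i \in C);
  rewrite ?iA ?iB ?iC ?(negbTE iA) ?(negbTE iB) ?(negbTE iC) /=;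
  rewrite ?(conf_out _ iA) ?(conf_out _ iB) ?(conf_out _ iC) //;
  try (by rewrite (disjointFr hAB iA) in iB);
  try (by rewrite (disjointFr hAC iA) in iC);
  try (by rewrite (disjointFr hBC iB) in iC). Qed.
Lemma vB a b c : rst B (val (g3 a b c)) = val b.
Proof. apply/ffunP => i; rewrite /= !ffunE /= ?ffunE ?inE;
  have [iA|iA] := boolP (i \in A); have [iB|iB] := boolP (i \in B);
  have [iC|iC] := boolP (i \in C);
  rewrite ?iA ?iB ?iC ?(negbTE iA) ?(negbTE iB) ?(negbTE iC) /=;
  rewrite ?(conf_out _ iA) ?(conf_out _ iB) ?(conf_out _ iC) //;
  try (by rewrite (disjointFr hAB iA) in iB);
  try (by rewrite (disjointFr hAC iA) in iC);
  try (by rewrite (disjointFr hBC iB) in iC). Qed.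
Lemma vC a b c : rst C (val (g3 a b c)) = val c.
Proof. apply/ffunP => i; rewrite /= !ffunE /= ?ffunE ?inE;
  have [iA|iA] := boolP (i \in A); have [iB|iB] := boolP (i \in B);
  have [iC|iC] := boolP (i \in C);
  rewrite ?iA ?iB ?iC ?(negbTE iA) ?(negbTE iB) ?(negbTE iC) /=;
  rewrite ?(conf_out _ iA) ?(conf_out _ iB) ?(conf_out _ iC) //;
  try (by rewrite (disjointFr hAB iA) in iB);
  try (by rewrite (disjointFr hAC iA) in iC);
  try (by rewrite (disjointFr hBC iB) in iC). Qed.
Lemma vKAB a b c : rst (K :\: (A :|: B)) (val (g3 a b c)) = val c.
Proof. apply/ffunP => i; rewrite /= !ffunE /= ?ffunE ?inE;
  have [iA|iA] := boolP (i \in A); have [iB|iB] := boolP (i \in B);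
  have [iC|iC] := boolP (i \in C);
  rewrite ?iA ?iB ?iC ?(negbTE iA) ?(negbTE iB) ?(negbTE iC) /=;
  rewrite ?(conf_out _ iA) ?(conf_out _ iB) ?(conf_out _ iC) //;
  try (by rewrite (disjointFr hAB iA) in iB);
  try (by rewrite (disjointFr hAC iA) in iC);
  try (by rewrite (disjointFr hBC iB) in iC). Qed.
Lemma vKBC a b c : rst (K :\: (B :|: C)) (val (g3 a b c)) = val a.
Proof. apply/ffunP => i; rewrite /= !ffunE /= ?ffunE ?inE;
  have [iA|iA] := boolP (i \in A); have [iB|iB] := boolP (i \in B);
  have [iC|iC] := boolP (i \in C);
  rewrite ?iA ?iB ?iC ?(negbTE iA) ?(negbTE iB) ?(negbTE iC) /=;
  rewrite ?(conf_out _ iA) ?(conf_out _ iB) ?(conf_out _ iC) //;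
  try (by rewrite (disjointFr hAB iA) in iB);
  try (by rewrite (disjointFr hAC iA) in iC);
  try (by rewrite (disjointFr hBC iB) in iC). Qed.
Lemma vKB a b c : rst (K :\: B) (val (g3 a b c)) = glue A (val a) (val c).
Proof. apply/ffunP => i; rewrite /= !ffunE /= ?ffunE ?inE;
  have [iA|iA] := boolP (i \in A); have [iB|iB] := boolP (i \in B);
  have [iC|iC] := boolP (i \in C);
  rewrite ?iA ?iB ?iC ?(negbTE iA) ?(negbTE iB) ?(negbTE iC) /=;
  rewrite ?(conf_out _ iA) ?(conf_out _ iB) ?(conf_out _ iC) //;
  try (by rewrite (disjointFr hAB iA) in iB);
  try (by rewrite (disjointFr hAC iA) in iC);
  try (by rewrite (disjointFr hBC iB) in iC). Qed.


Lemma sumK_pred (V : nmodType) (P : pred (conf K)) (F : conf K -> V) :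
  \sum_(u | P u) F u = \sum_a \sum_b \sum_c (if P (g3 a b c) then F (g3 a b c) else 0).
Proof. by rewrite big_mkcond sumK. Qed.

Lemma sel3 (V : nmodType) (P : pred (conf K)) (F : conf K -> V) a0 b0 c0 :
  (forall a b c, P (g3 a b c) = [&& a == a0, b == b0 & c == c0]) ->
  \sum_(u | P u) F u = F (g3 a0 b0 c0).
Proof.
move=> hP; rewrite sumK_pred.
transitivity (\sum_a (if a == a0 then \sum_b (if b == b0 then
   \sum_c (if c == c0 then F (g3 a b c) else 0) else 0) else 0)).
  apply: eq_bigr => a _; have [->|na] := eqVneq a a0; last first.
    by rewrite big1 // => b _; rewrite big1 // => c _; rewrite hP (negbTE na).
  apply: eq_bigr => b _; have [->|nb] := eqVneq b b0; last first.
    by rewrite big1 // => c _; rewrite hP (negbTE nb) andbF.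
  by apply: eq_bigr => c _; rewrite hP !eqxx.
by rewrite sum_if_eq sum_if_eq sum_if_eq.
Qed.

Lemma selBC (V : nmodType) (P : pred (conf K)) (F : conf K -> V) b0 c0 :
  (forall a b c, P (g3 a b c) = (b == b0) && (c == c0)) ->
  \sum_(u | P u) F u = \sum_a F (g3 a b0 c0).
Proof.
move=> hP; rewrite sumK_pred; apply: eq_bigr => a _.
transitivity (\sum_b (if b == b0 then
   \sum_c (if c == c0 then F (g3 a b c) else 0) else 0)).
  apply: eq_bigr => b _; have [->|nb] := eqVneq b b0; last first.
    by rewrite big1 // => c _; rewrite hP (negbTE nb).
  by apply: eq_bigr => c _; rewrite hP !eqxx.
by rewrite sum_if_eq sum_if_eq.
Qed.

Lemma selAB (V : nmodType) (P : pred (conf K)) (F : conf K -> V) a0 b0 :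
  (forall a b c, P (g3 a b c) = (a == a0) && (b == b0)) ->
  \sum_(u | P u) F u = \sum_c F (g3 a0 b0 c).
Proof.
move=> hP; rewrite sumK_pred.
transitivity (\sum_a (if a == a0 then \sum_b (if b == b0 then
   \sum_c F (g3 a b c) else 0) else 0)).
  apply: eq_bigr => a _; have [->|na] := eqVneq a a0; last first.
    by rewrite big1 // => b _; rewrite big1 // => c _; rewrite hP (negbTE na).
  apply: eq_bigr => b _; have [->|nb] := eqVneq b b0; last first.
    by rewrite big1 // => c _; rewrite hP (negbTE nb) andbF.
  by apply: eq_bigr => c _; rewrite hP !eqxx.
by rewrite sum_if_eq sum_if_eq.
Qed.

Lemma selB (V : nmodType) (P : pred (conf K)) (F : conf K -> V) b0 :
  (forall a b c, P (g3 a b c) = (b == b0)) ->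
  \sum_(u | P u) F u = \sum_a \sum_c F (g3 a b0 c).
Proof.
move=> hP; rewrite sumK_pred; apply: eq_bigr => a _.
transitivity (\sum_b (if b == b0 then \sum_c F (g3 a b c) else 0)).
  apply: eq_bigr => b _; have [->|nb] := eqVneq b b0; last first.
    by rewrite big1 // => c _; rewrite hP (negbTE nb).
  by apply: eq_bigr => c _; rewrite hP !eqxx.
by rewrite sum_if_eq.
Qed.

Lemma sum_pred2 (V : nmodType) (X : finType) (P1 : pred X) (P2 : X -> pred X) (F : X -> X -> V) :
  \sum_u \sum_(v | P1 u && P2 u v) F u v = \sum_(u | P1 u) \sum_(v | P2 u v) F u v.
Proof.
rewrite [RHS]big_mkcond /=; apply: eq_bigr => u _; case: (P1 u) => //=.
by rewrite big1.
Qed.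

Variable R : realType.

Lemma P_BC (rho : op R T K) b c b' c' :
  @ptr R N T K (B :|: C) rho (gBC b c) (gBC b' c') = \sum_a rho (g3 a b c) (g3 a b' c').
Proof.
rewrite /ptr sum_pred2.
rewrite (@selBC _ (fun u => rst (B :|: C) (val u) == val (gBC b c)) _ b c); last first.
  by move=> a1 b1 c1; rewrite /= vBC /gBC gl_eq.
apply: eq_bigr => a _.
rewrite (@sel3 _ _ _ a b' c') // => a2 b2 c2.
rewrite vBC !vKBC /gBC gl_eq val_eqE [a == a2]eq_sym.
by case: (a2 == a); rewrite ?andbT ?andbF.
Qed.


Lemma P_AB (rho : op R T K) a b a' b' :
  @ptr R N T K (A :|: B) rho (gAB a b) (gAB a' b') = \sum_c rho (g3 a b c) (g3 a' b' c).
Proof.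
rewrite /ptr sum_pred2.
rewrite (@selAB _ (fun u => rst (A :|: B) (val u) == val (gAB a b)) _ a b); last first.
  by move=> a1 b1 c1; rewrite /= vAB /gAB gl_eq.
apply: eq_bigr => c _.
rewrite (@sel3 _ _ _ a' b' c) // => a2 b2 c2.
rewrite vAB !vKAB /gAB gl_eq val_eqE [c == c2]eq_sym.
by case: (c2 == c); rewrite ?andbT ?andbF.
Qed.

Lemma P_B (rho : op R T K) b b' :
  @ptr R N T K B rho b b' = \sum_a \sum_c rho (g3 a b c) (g3 a b' c).
Proof.
rewrite /ptr sum_pred2.
rewrite (@selB _ (fun u => rst B (val u) == val b) _ b); last first.
  by move=> a1 b1 c1; rewrite /= vB val_eqE.
apply: eq_bigr => a _; apply: eq_bigr => c _.
rewrite (@sel3 _ _ _ a b' c) // => a2 b2 c2.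
rewrite vB !vKB val_eqE.
rewrite -[glue A (val a) (val c)]/(val (gl hAC a c)) -[glue A (val a2) (val c2)]/(val (gl hAC a2 c2)).
rewrite gl_eq [a == a2]eq_sym [c == c2]eq_sym.
by case: (a2 == a); case: (b2 == b'); case: (c2 == c).
Qed.

Lemma P_K (rho : op R T K) u v : @ptr R N T K K rho u v = rho u v.
Proof.
rewrite /ptr sum_pred2.
have E : forall f : amb T, rst (K :\: K) f = [ffun => None].
  by move=> f; apply/ffunP => i; rewrite !ffunE !inE andNb.
rewrite (big_pred1 u) => [|u' /=]; last by rewrite rstK val_eqE.
by rewrite (big_pred1 v) => [|v' /=] //; rewrite rstK val_eqE !E eqxx andbT.
Qed.


Lemma sAB : A :|: B \subset K.
Proof. by apply/fintype.subsetP => i; rewrite !inE => /orP[->|->]; rewrite ?orbT. Qed.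
Lemma sA : A \subset K.
Proof. by apply/fintype.subsetP => i; rewrite !inE => ->. Qed.
Lemma sB : B \subset K.
Proof. by apply/fintype.subsetP => i; rewrite !inE => ->; rewrite ?orbT. Qed.
Lemma sC : C \subset K.
Proof. by apply/fintype.subsetP => i; rewrite !inE => ->; rewrite ?orbT. Qed.

Lemma rAB_g3 a b c : restr sAB (g3 a b c) = gAB a b.
Proof. by apply: val_inj; rewrite /= vAB. Qed.
Lemma rA_g3 a b c : restr sA (g3 a b c) = a.
Proof. by apply: val_inj; rewrite /= vA. Qed.
Lemma rB_g3 a b c : restr sB (g3 a b c) = b.
Proof. by apply: val_inj; rewrite /= vB. Qed.
Lemma rC_g3 a b c : restr sC (g3 a b c) = c.
Proof. by apply: val_inj; rewrite /= vC. Qed.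

Definition Q1of (Q2 : op R T (A :|: B)) : op R T K :=
  fun x y => Q2 (restr sAB x) (restr sAB y) * (rst C (val x) == rst C (val y))%:R.

Lemma Q1of_g3 Q2 a b c a' b' c' :
  Q1of Q2 (g3 a b c) (g3 a' b' c') = Q2 (gAB a b) (gAB a' b') * (c == c')%:R.
Proof. by rewrite /Q1of !rAB_g3 !vC val_eqE. Qed.

Lemma trI (Q2 : op R T (A :|: B)) (rho : op R T K) :
  tr (opmul (Q1of Q2) rho) = tr (opmul Q2 (@ptr R N T K (A :|: B) rho)).
Proof.
rewrite /tr /opmul sumK sumAB.
apply: eq_bigr => a _; apply: eq_bigr => b _.
rewrite sumAB.
transitivity (\sum_c \sum_a' \sum_b' Q2 (gAB a b) (gAB a' b') * rho (g3 a' b' c) (g3 a b c)).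
  apply: eq_bigr => c _; rewrite sumK; apply: eq_bigr => a' _; apply: eq_bigr => b' _.
  rewrite (bigD1 c) //= Q1of_g3 eqxx mulr1 big1 ?addr0 // => c' nc.
  by rewrite Q1of_g3 eq_sym (negbTE nc) mulr0 mul0r.
rewrite exchange_big; apply: eq_bigr => a' _; rewrite exchange_big; apply: eq_bigr => b' _.
by rewrite P_AB mulr_sumr.
Qed.


Definition G1of (rho : op R T K) : op R T K := tens (@id_op R N T A) (@ptr R N T K (B :|: C) rho).
Definition G2of (rho : op R T K) : op R T (A :|: B) := tens (@id_op R N T A) (@ptr R N T K B rho).

Lemma G1_g3 rho a b c a' b' c' :
  G1of rho (g3 a b c) (g3 a' b' c') = (a == a')%:R * \sum_a1 rho (g3 a1 b c) (g3 a1 b' c').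
Proof. by rewrite /G1of /tens /id_op /g3 !restr_gl1 !restr_gl2 P_BC. Qed.

Lemma G2_gAB rho a b a' b' :
  G2of rho (gAB a b) (gAB a' b') = (a == a')%:R * \sum_a1 \sum_c rho (g3 a1 b c) (g3 a1 b' c).
Proof. by rewrite /G2of /tens /id_op /gAB !restr_gl1 !restr_gl2 P_B. Qed.

Lemma trII (Q2 : op R T (A :|: B)) (rho : op R T K) :
  tr (opmul (Q1of Q2) (G1of rho)) = tr (opmul Q2 (G2of rho)).
Proof.
rewrite /tr /opmul sumK sumAB.
apply: eq_bigr => a _; apply: eq_bigr => b _.
rewrite sumAB.
transitivity (\sum_c \sum_b' Q2 (gAB a b) (gAB a b') * \sum_a1 rho (g3 a1 b' c) (g3 a1 b c)).
  apply: eq_bigr => c _; rewrite sumK.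
  transitivity (\sum_a' (if a' == a then \sum_b' Q2 (gAB a b) (gAB a' b') *
       \sum_a1 rho (g3 a1 b' c) (g3 a1 b c) else 0)); last by rewrite sum_if_eq.
  apply: eq_bigr => a' _; have [->|na] := eqVneq a' a; last first.
    rewrite big1 // => b' _; rewrite big1 // => c' _.
    by rewrite G1_g3 (negbTE na) !mul0r mulr0.
  apply: eq_bigr => b' _.
  rewrite (bigD1 c) //= [X in _ + X]big1 ?addr0; last first.
    by move=> c' nc; rewrite Q1of_g3 eq_sym (negbTE nc) mulr0 mul0r.
  by rewrite Q1of_g3 G1_g3 !eqxx mulr1 mul1r.
transitivity (\sum_a' (if a' == a then \sum_b' Q2 (gAB a b) (gAB a' b') *
       \sum_a1 \sum_c rho (g3 a1 b' c) (g3 a1 b c) else 0)); last first.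
  apply: eq_bigr => a' _; have [->|na] := eqVneq a' a; last first.
    by rewrite big1 // => b' _; rewrite G2_gAB (negbTE na) mul0r mulr0.
  by apply: eq_bigr => b' _; rewrite G2_gAB eqxx mul1r.
rewrite sum_if_eq exchange_big; apply: eq_bigr => b' _.
rewrite -mulr_sumr; congr (_ * _); exact: exchange_big.
Qed.

End Main.


Section Main2.
Variables (N : nat) (T : 'I_N -> finType).
Variables (A B C : {set 'I_N}).
Hypotheses (hAB : [disjoint A & B]) (hAC : [disjoint A & C]) (hBC : [disjoint B & C]).
Variable R : realType.
Local Notation conf := (conf T).
Local Notation K := (A :|: (B :|: C)).
Local Notation g3 := (g3 hAB hAC hBC).
Local Notation sA := (sA A B C).
Local Notation sB := (sB A B C).
Local Notation sC := (sC A B C).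

Definition psi (phi : conf K -> R[i]) (a1 a : conf A) : conf K -> R[i] :=
  fun u => (restr sA u == a1)%:R * phi (g3 a (restr sB u) (restr sC u)).

Lemma psi_g3 phi a1 a x b c : psi phi a1 a (g3 x b c) = (x == a1)%:R * phi (g3 a b c).
Proof. by rewrite /psi rA_g3 rB_g3 rC_g3. Qed.

Lemma decomp (u : conf K) : g3 (restr sA u) (restr sB u) (restr sC u) = u.
Proof.
apply: val_inj; apply/ffunP => i; rewrite /= !ffunE.
have [iA|iA] := boolP (i \in A); rewrite ?iA ?(negbTE iA) //=.
have [iB|iB] := boolP (i \in B); rewrite ?iB ?(negbTE iB) //=.
have [iC|iC] := boolP (i \in C); rewrite ?iC ?(negbTE iC) //=.
by rewrite conf_out // !inE negb_or iA negb_or iB iC.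
Qed.


Local Notation G1of := (@G1of N T A B C R).

Lemma psi_bil (rho : op R T K) phi a1 a :
  bil rho (psi phi a1 a) (psi phi a1 a) =
  \sum_b \sum_c \sum_b' \sum_c'
     (phi (g3 a b c))^*%C * rho (g3 a1 b c) (g3 a1 b' c') * phi (g3 a b' c').
Proof.
rewrite /bil (sumK hAB hAC hBC) (bigD1 a1) //= [X in _ + X]big1 ?addr0; last first.
  move=> x nx; rewrite big1 // => b _; rewrite big1 // => c _; rewrite big1 // => y _.
  by rewrite psi_g3 (negbTE nx) mul0r rmorph0 !mul0r.
apply: eq_bigr => b _; apply: eq_bigr => c _.
rewrite (sumK hAB hAC hBC) (bigD1 a1) //= [X in _ + X]big1 ?addr0; last first.
  move=> x nx; rewrite big1 // => b' _; rewrite big1 // => c' _.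
  by rewrite !psi_g3 (negbTE nx) mul0r mulr0.
apply: eq_bigr => b' _; apply: eq_bigr => c' _.
by rewrite !psi_g3 eqxx !mul1r.
Qed.

Lemma bilG (rho : op R T K) phi :
  bil (G1of rho) phi phi = \sum_a \sum_a1 bil rho (psi phi a1 a) (psi phi a1 a).
Proof.
under [RHS]eq_bigr do under eq_bigr do rewrite psi_bil.
rewrite /bil (sumK hAB hAC hBC); apply: eq_bigr => a _.
transitivity (\sum_b \sum_c \sum_a1 \sum_b' \sum_c'
     (phi (g3 a b c))^*%C * rho (g3 a1 b c) (g3 a1 b' c') * phi (g3 a b' c')); last first.
  rewrite [RHS]exchange_big; apply: eq_bigr => b _; exact: exchange_big.
apply: eq_bigr => b _; apply: eq_bigr => c _.
rewrite (sumK hAB hAC hBC) (bigD1 a) //= [X in _ + X]big1 ?addr0; last first.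
  move=> x nx; rewrite big1 // => b' _; rewrite big1 // => c' _.
  by rewrite G1_g3 eq_sym (negbTE nx) !mul0r mulr0 mul0r.
rewrite [RHS]exchange_big; apply: eq_bigr => b' _; rewrite [RHS]exchange_big; apply: eq_bigr => c' _.
rewrite G1_g3 eqxx mul1r mulr_sumr mulr_suml; by apply: eq_bigr => a1 _.
Qed.


Lemma sum_psi phi u : \sum_a psi phi a a u = phi u.
Proof.
rewrite /psi (bigD1 (restr sA u)) //= eqxx mul1r big1 ?addr0 ?decomp //.
by move=> a na; rewrite eq_sym (negbTE na) mul0r.
Qed.

Lemma bil_lin (X : finType) (P Q : X -> X -> R[i]) d phi :
  bil (fun x y => d * P x y - Q x y) phi phi = d * bil P phi phi - bil Q phi phi.
Proof.
rewrite /bil mulr_sumr -sumrB; apply: eq_bigr => x _.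
rewrite mulr_sumr -sumrB; apply: eq_bigr => y _; ring.
Qed.

Lemma bil_ext (X : finType) (P : X -> X -> R[i]) u u' :
  (forall z, u z = u' z) -> bil P u u = bil P u' u'.
Proof.
by move=> h; rewrite /bil; apply: eq_bigr => x _; apply: eq_bigr => y _; rewrite !h.
Qed.

Lemma psdIII (rho : op R T K) : psdX rho ->
  psdX (fun x y => #|{: conf A}|%:R * G1of rho x y - rho x y).
Proof.
move=> hr phi; rewrite bil_lin subr_ge0.
rewrite (bil_ext rho (u' := fun z => \sum_a psi phi a a z)); last by move=> z; rewrite sum_psi.
apply: le_trans (bil_nfold _ hr) _.
apply: ler_wpM2l; first by rewrite ler0n.
rewrite bilG; apply: ler_sum => a _.
rewrite (bigD1 a) //= lerDl; apply: sumr_ge0 => a1 _; exact: hr.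
Qed.

End Main2.


Lemma ratio_lb (R : realType) (eta : R) (s g : R[i]) (dn : nat) : 0 < eta -> (eta%:C)%C <= s ->
  0 <= dn%:R * g - s -> (0 < dn)%N /\ (dn%:R)^-1 <= complex.Re (g / s).
Proof.
move=> he; rewrite -[(dn%:R : R[i])](rmorph_nat (real_complex R)).
case: s => s1 s2; case: g => g1 g2.
rewrite lecE /= => /andP[/eqP hs2 hs1]; subst s2.
rewrite -[((dn%:R : R)%:C)%C]complexr0.
simpc => /andP[_ hd].
have dpos : (0 < dn)%N.
  rewrite lt0n; apply/negP => /eqP d0; move: hd; rewrite d0 mul0r; lra.
split => //.
have dR : (0 : R) < dn%:R by rewrite ltr0n.
have s1p : 0 < s1 by lra.
have -> : g1 * (s1 / (s1 ^+ 2 + 0 ^+ 2)) = g1 / s1.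
  by field; rewrite gt_eqF.
rewrite ler_pdivlMr // mulrC ler_pdivrMr //; lra.
Qed.

Section Fin.
Variables (R : realType) (N : nat) (T : 'I_N -> finType).

Lemma transportQ (M : forall I : {set 'I_N}, R -> op R T I -> Prop) (I J : {set 'I_N})
  (e : I = J) r (Q : op R T I) : M I r Q -> exists Q' : op R T J, M J r Q' /\
  forall (x y : conf T J) (x' y' : conf T I), val x' = val x -> val y' = val y -> Q' x y = Q x' y'.
Proof.
subst J => hM; exists Q; split => // x y x' y' hx hy.
by rewrite (val_inj hx) (val_inj hy).
Qed.

Definition castc (I J : {set 'I_N}) (e : J = I) (x : conf T J) : conf T I :=
  exist _ (val x) (eq_rect _ (fun S => onI S (val x)) (valP x) _ e).

Lemma tr_ext (I : {set 'I_N}) (P P' Q Q' : op R T I) :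
  (forall x y, P x y = P' x y) -> (forall x y, Q x y = Q' x y) ->
  tr (opmul P Q) = tr (opmul P' Q').
Proof.
by move=> hP hQ; rewrite /tr /opmul; apply: eq_bigr => x _; apply: eq_bigr => z _; rewrite hP hQ.
Qed.

Lemma tr_id (I : {set 'I_N}) (P : op R T I) : tr (opmul (@id_op R N T I) P) = tr P.
Proof.
rewrite /tr /opmul; apply: eq_bigr => x _.
rewrite (bigD1 x) //= /id_op eqxx mul1r big1 ?addr0 // => z nz.
by rewrite eq_sym (negbTE nz) mul0r.
Qed.

End Fin.

Theorem propositionD23 (R : realType) (N : nat) (T : 'I_N -> finType)
    (M : forall I : {set 'I_N}, R -> op R T I -> Prop)
    (A B C : {set 'I_N}) (rho : op R T (A :|: (B :|: C))) (r eta : R) :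
  complexity_family M ->
  [disjoint A & B] -> [disjoint A & C] -> [disjoint B & C] ->
  subnormalized rho ->
  0 <= r ->
  0 < eta -> ((eta%:C)%C <= tr rho)%R ->
  HH M r eta A (B :|: C) rho <= HH M r eta A B rho.
Proof.
move=> [hM1 hM0 hMmono hMtens] hAB hAC hBC [hpsd _] hr he htr.
rewrite /HH /DH !opprK.
set S1 := (X in ln (inf X) <= _).
set S2 := (X in _ <= ln (inf X)).
set d := #|{: conf T A}|.
have lb : forall y, S1 y -> (0 < d)%N /\ (d%:R)^-1 <= y.
  move=> y [Q [hQ hQe] <-].
  have hQpsd : psdX Q := (hM1 _ _ _ hr hQ).1.
  apply: (ratio_lb he hQe).
  have := tr_psd hQpsd (psdIII hAB hAC hBC hpsd).
  congr (0 <= _); rewrite /tr /opmul mulr_sumr -sumrB; apply: eq_bigr => x _.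
  rewrite mulr_sumr -sumrB; apply: eq_bigr => z _; rewrite P_K /G1of; ring.
have S2sub : forall y, S2 y -> S1 y.
  move=> y [Q2 [hQ2 hQ2e] <-].
  have hM' : M ((A :|: B) :|: C) r (tens Q2 (@id_op R N T C)).
    have hd : [disjoint A :|: B & C] by apply: hAB_C.
    by rewrite -[r]addr0; apply: (hMtens _ _ _ _ _ _ hd hr (lexx 0) hQ2 (hM0 C)).
  have e : (A :|: B) :|: C = A :|: (B :|: C) by rewrite finset.setUA.
  have [Q1 [hQ1M hQ1]] := transportQ e hM'.
  have hQ1' : forall x y0, Q1 x y0 = Q1of Q2 x y0.
    move=> x y0; rewrite (hQ1 x y0 (castc (esym e) x) (castc (esym e) y0)) //.
    rewrite /tens /Q1of /id_op; congr (Q2 _ _ * _); try by apply: val_inj.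
  have t1 : tr (opmul Q1 (@ptr R N T _ (A :|: (B :|: C)) rho)) = tr (opmul Q2 (@ptr R N T _ (A :|: B) rho)).
    by rewrite -(trI hAB hAC hBC); apply: tr_ext => // x z; rewrite P_K.
  have t2 : tr (opmul Q1 (G1of rho)) = tr (opmul Q2 (G2of rho)).
    by rewrite -(trII hAB hAC hBC); apply: tr_ext.
  exists Q1; first by split => //; rewrite t1.
  by rewrite t1; congr (complex.Re (_ / _)); exact: t2.
have trp : tr (@ptr R N T _ (A :|: B) rho) = tr rho.
  rewrite /tr (sumAB hAB) [RHS](sumK hAB hAC hBC); apply: eq_bigr => a _; apply: eq_bigr => b _.
  by rewrite P_AB.
have S2ne : (S2 !=set0)%classic.
  eexists; exists (@id_op R N T (A :|: B)) => //; split.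
    by apply: (hMmono _ 0 r) => //; exact: hM0.
  by rewrite tr_id trp.
have S1ne : (S1 !=set0)%classic by case: S2ne => y /S2sub hy; exists y.
have dpos : (0 < d)%N by case: S1ne => y /lb [].
have cpos : (0 : R) < (d%:R)^-1 by rewrite invr_gt0 ltr0n.
have lbS1 : lbound S1 (d%:R)^-1 by move=> y /lb [].
have hinf1 := lb_le_inf S1ne lbS1.
have hlS1 : has_lbound S1 by exists (d%:R)^-1.
have le12 : inf S1 <= inf S2.
  apply: lb_le_inf S2ne _ => y /S2sub hy; exact: ge_inf hlS1 _ hy.
have p1 : 0 < inf S1 by apply: lt_le_trans hinf1.
have p2 : 0 < inf S2 by apply: lt_le_trans le12.
by rewrite ler_ln ?posrE.
Qed.
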